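(* Let $\Pi = (\mathcal{A}, \mathcal{E}, \mathcal{R})$ be an epistemic logic program and let $\Pi' = (\mathcal{A}', \mathcal{E}', \mathcal{R})$ be an epistemic logic program with the same set of rules $\mathcal{R}$, but with $\mathcal{A}' \supset \mathcal{A}$ and $\mathcal{E}' \supset \mathcal{E}$. Then the sets of candidate world views of $\Pi$ and $\Pi'$ coincide: $\mathrm{CWV}(\Pi) = \mathrm{CWV}(\Pi')$.
   Context: A literal over a set of propositional atoms $\mathcal{A}$ is an atom $a$ or its default negation $\neg a$. An interpretation is a set $I\subseteq\mathcal{A}$; $I\models a$ iff $a\in I$, $I\models \neg \ell$ iff $I\not\models \ell$ (so doubly negated atoms are allowed), extended to sets of literals conjunctively. A (plain) logic program is a pair $(\mathcal{A},\mathcal{R})$ of atoms and rules $a_1\vee\cdots\vee a_l \leftarrow a_{l+1},\ldots,a_m,\neg\ell_1,\ldots,\neg\ell_n$ ($a_i$ atoms, $\ell_i$ literals); for a rule $r$, $H(r)$ is the head set, $B(r)$ the body and $B^+(r)=\{a_{l+1},\ldots,a_m\}$. $M\models r$ iff $M\models B(r)$ implies $M\models$ some atom of $H(r)$; models of a program are interpretations satisfying all rules. The GL-reduct of $\Pi=(\mathcal{A},\mathcal{R})$ w.r.t. $I$ is $(\mathcal{A},\{H(r)\leftarrow B^+(r)\mid r\in\mathcal{R},\ I\models\neg\ell \text{ for all } \neg\ell\in B(r)\})$. $M$ is an answer set of $\Pi$ iff $M$ is a model of $\Pi$ and no $M'\subset M$ is a model of the GL-reduct $\Pi^M$; $AS(\Pi)$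 is the set of answer sets (triple negations $\neg\neg\neg a$ are treated as $\neg a$). An epistemic literal is $\mathbf{not}\,\ell$ for a literal $\ell$. An epistemic logic program (ELP) is a triple $(\mathcal{A},\mathcal{E},\mathcal{R})$ with $\mathcal{E}$ a set of epistemic literals over $\mathcal{A}$ and $\mathcal{R}$ a set of rules $a_1\vee\cdots\vee a_k\leftarrow \ell_1,\ldots,\ell_m,\xi_1,\ldots,\xi_j,\neg\xi_{j+1},\ldots,\neg\xi_n$ with $a_i\in\mathcal{A}$, $\ell_i$ literals, $\xi_i\in\mathcal{E}$. A guess is a subset $\Phi\subseteq\mathcal{E}$. A set $\mathcal{I}$ of interpretations is $\Phi$-compatible w.r.t. $\mathcal{E}$ iff (1) $\mathcal{I}\neq\emptyset$, (2) for each $\mathbf{not}\,\ell\in\Phi$ some $I\in\mathcal{I}$ has $I\not\models\ell$, and (3) for each $\mathbf{not}\,\ell\in\mathcal{E}\setminus\Phi$ all $I\in\mathcal{I}$ satisfy $I\models\ell$. The epistemic reduct $\Pi^\Phi$ is the logic program $(\mathcal{A},\mathcal{R}^\Phi)$ obtained by replacing in every rule each occurrence of $\mathbf{not}\,\ell\in\Phi$ by $\top$ and every remaining $\mathbf{not}$ by $\neg$. A set $\mathcal{M}$ of interpretations is a candidate world view (CWV) of $\Pi$ iff there is a guess $\Phi\subseteq\mathcal{E}$ with $\mathcal{M}=AS(\Pi^\Phi)$ and $\mathcal{M}$ $\Phi$-compatible w.r.t. $\mathcal{E}$; $\mathrm{CWV}(\Pi)$ denotes the set of CWVs. *)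

(* Defs.v *)
From Stdlib Require Import List.
Import ListNotations.
Set Implicit Arguments.

Section ELP.
Variable Atom : Type.

Inductive lit : Type := LPos (a : Atom) | LNeg (a : Atom).

Definition lit_atom (l : lit) : Atom := match l with LPos a => a | LNeg a => a end.

Definition lsat (I : Atom -> Prop) (l : lit) : Prop :=
  match l with LPos a => I a | LNeg a => ~ I a end.

(* Body elements of a plain rule: a positive atom a, a negated literal ~l
   (i.e. ~a or ~~a), and the constants T and ~T produced by the epistemic
   reduct. *)
Inductive bitem : Type :=
  | BAtom (a : Atom)
  | BNeg (l : lit)
  | BTop
  | BNegTop.

Definition bsat (I : Atom -> Prop) (b : bitem) : Prop :=
  match b with
  | BAtom a => I a
  | BNeg l => ~ lsat I l
  | BTop => True
  | BNegTop => False
  end.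

Record prule : Type := PRule { phead : list Atom; pbody : list bitem }.

Definition rsat (M : Atom -> Prop) (r : prule) : Prop :=
  (forall b, In b (pbody r) -> bsat M b) -> exists a, In a (phead r) /\ M a.

Definition interp (A : Atom -> Prop) (I : Atom -> Prop) : Prop :=
  forall a, I a -> A a.

Definition is_model (A : Atom -> Prop) (R : prule -> Prop) (M : Atom -> Prop) : Prop :=
  interp A M /\ forall r, R r -> rsat M r.

Definition neg_item (b : bitem) : Prop :=
  match b with BNeg _ | BNegTop => True | _ => False end.

Fixpoint bplus (bs : list bitem) : list Atom :=
  match bs with
  | [] => []
  | BAtom a :: bs' => a :: bplus bs'
  | _ :: bs' => bplus bs'
  end.

Definition gl_reduct (R : prule -> Prop) (I : Atom -> Prop) : prule -> Prop :=
  fun r' => exists r, R r /\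
    (forall b, In b (pbody r) -> neg_item b -> bsat I b) /\
    r' = PRule (phead r) (map BAtom (bplus (pbody r))).

Definition strict_subset (M' M : Atom -> Prop) : Prop :=
  (forall a, M' a -> M a) /\ exists a, M a /\ ~ M' a.

Definition answer_set (A : Atom -> Prop) (R : prule -> Prop) (M : Atom -> Prop) : Prop :=
  is_model A R M /\
  ~ (exists M', strict_subset M' M /\ is_model A (gl_reduct R M) M').

(* An epistemic literal  not l  is represented by the literal l. *)
Record erule : Type := ERule {
  ehead : list Atom;
  ebody : list lit;
  epos  : list lit;
  eneg  : list lit
}.

Definition wf_elp (A : Atom -> Prop) (E : lit -> Prop) (R : erule -> Prop) : Prop :=
  (forall l, E l -> A (lit_atom l)) /\
  (forall r, R r ->
     (forall a, In a (ehead r) -> A a) /\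
     (forall l, In l (ebody r) -> A (lit_atom l)) /\
     (forall l, In l (epos r) -> E l) /\
     (forall l, In l (eneg r) -> E l)).

(* Epistemic reduct w.r.t. a guess Phi (given as a boolean predicate):
   not l in Phi  ~>  T ;  other  not l  ~>  ~ l ;
   ~ not l with l in Phi ~> ~T ; other ~ not l ~> ~~l, where ~~~a is ~a. *)
Definition tr_ord (l : lit) : bitem :=
  match l with LPos a => BAtom a | LNeg a => BNeg (LPos a) end.

Definition tr_pos (Phi : lit -> bool) (l : lit) : bitem :=
  if Phi l then BTop else BNeg l.

Definition tr_neg (Phi : lit -> bool) (l : lit) : bitem :=
  if Phi l then BNegTop
  else match l with LPos a => BNeg (LNeg a) | LNeg a => BNeg (LPos a) end.

Definition ereduct_rule (Phi : lit -> bool) (r : erule) : prule :=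
  PRule (ehead r)
        (map tr_ord (ebody r) ++ map (tr_pos Phi) (epos r) ++ map (tr_neg Phi) (eneg r)).

Definition ereduct (Phi : lit -> bool) (R : erule -> Prop) : prule -> Prop :=
  fun r' => exists r, R r /\ r' = ereduct_rule Phi r.

Definition compatible (E : lit -> Prop) (Phi : lit -> bool)
  (M : (Atom -> Prop) -> Prop) : Prop :=
  (exists I, M I) /\
  (forall l, E l -> Phi l = true -> exists I, M I /\ ~ lsat I l) /\
  (forall l, E l -> Phi l = false -> forall I, M I -> lsat I l).

Definition is_cwv (A : Atom -> Prop) (E : lit -> Prop) (R : erule -> Prop)
  (M : (Atom -> Prop) -> Prop) : Prop :=
  exists Phi : lit -> bool,
    (forall l, Phi l = true -> E l) /\
    (forall I, M I <-> answer_set A (ereduct Phi R) I) /\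
    compatible E Phi M.

End ELP.

(* Main.v *)
Require Import Defs.
From Stdlib Require Import List Classical ClassicalEpsilon FunctionalExtensionality PropExtensionality.
Import ListNotations.

Section Aux.
Variable Atom : Type.

Definition good (A : Atom -> Prop) (P : prule Atom -> Prop) : Prop :=
  forall r, P r -> (forall a, In a (phead r) -> A a) /\ (forall a, In a (bplus (pbody r)) -> A a).

Lemma bplus_map (l : list Atom) : bplus (map (@BAtom Atom) l) = l.
Proof. induction l; simpl; congruence. Qed.

Lemma in_bplus (b : list (bitem Atom)) a : In a (bplus b) -> In (BAtom a) b.
Proof.
  induction b as [|x b IH]; simpl; auto.
  destruct x; simpl; intuition (subst; auto).
Qed.

Lemma as_restrict (A : Atom -> Prop) P M :
  good A P -> is_model (fun _ => True) (gl_reduct P M) M ->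
  is_model (fun _ => True) (gl_reduct P M) (fun a => M a /\ A a).
Proof.
  intros HG [_ HM]. split; [now intros|].
  intros r' Hr'. pose proof Hr' as Hr0.
  destruct Hr' as (r & Hr & Hneg & ->).
  destruct (HG r Hr) as [Hh Hb].
  intros Hbody.
  assert (Hb2 : forall b, In b (pbody (PRule (phead r) (map (@BAtom Atom) (bplus (pbody r))))) -> bsat M b).
  { intros b Hb0. specialize (Hbody b Hb0). simpl in Hb0.
    apply in_map_iff in Hb0 as (x & <- & _). simpl in *. tauto. }
  destruct (HM _ Hr0 Hb2) as (a & Ha & HMa).
  exists a. simpl in Ha. split; auto.
Qed.

Lemma model_interp (A : Atom -> Prop) P M : is_model A P M -> forall A', (forall a, M a -> A' a) -> is_model A' P M.
Proof. intros [_ H] A' HA; split; auto. Qed.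

Lemma answer_set_equiv (A A' : Atom -> Prop) P M :
  good A P -> (forall a, A a -> A' a) ->
  answer_set A P M <-> answer_set A' P M.
Proof.
  intros HG HAA. split.
  - intros [[HI HM] Hmin]. split; [split; [intros a Ha; auto|exact HM]|].
    intros (M' & [Hs Hex] & Hm). apply Hmin. exists M'. split; [split; auto|].
    eapply model_interp; [exact Hm|]. intros b Hb; apply HI, Hs; auto.
  - intros [[HI HM] Hmin].
    assert (HMA : forall a, M a -> A a).
    { intros a Ha. apply NNPP; intro Hna. apply Hmin.
      exists (fun a => M a /\ A a). split.
      + split; [tauto|]. exists a; tauto.
      + assert (Hm : is_model (fun _ => True) (gl_reduct P M) M).
        { split; [now intros|]. intros r' (r & Hr & Hneg & ->) Hb.
          destruct (HM r Hr) as (x & Hx & HMx).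
          - intros b Hbin. destruct b; simpl.
            + apply (Hb (BAtom a0)). simpl. apply in_map_iff. exists a0. split; auto.
              clear - Hbin. induction (pbody r) as [|y l IH]; simpl in *; [easy|].
              destruct Hbin as [->|H]; [simpl; auto|]. destruct y; simpl; auto.
            + apply (Hneg (BNeg l)); simpl; auto.
            + auto.
            + apply (Hneg (BNegTop Atom)); simpl; auto.
          - exists x; auto. }
        pose proof (@as_restrict A P M HG Hm) as H; clear Hm. eapply model_interp; [exact H|]. intros b [_ Hb]; auto. }
    split; [split; [exact HMA|exact HM]|].
    intros (M' & [Hs Hex] & Hm). apply Hmin. exists M'. split; [split; auto|].
    eapply model_interp; [exact Hm|]. intros b Hb; apply HAA, HMA, Hs; auto.
Qed.

Lemma ereduct_good (A : Atom -> Prop) E R Phi : wf_elp A E R -> good A (ereduct Phi R).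
Proof.
  intros [_ HW] r' (r & Hr & ->). destruct (HW r Hr) as (Hh & Hb & _ & _).
  split; [exact Hh|]. simpl. intros a Ha. apply in_bplus in Ha.
  apply in_app_or in Ha as [Ha|Ha].
  - apply in_map_iff in Ha as (x & Hx & Hin). apply Hb in Hin.
    destruct x; simpl in *; inversion Hx; subst; auto.
  - apply in_app_or in Ha as [Ha|Ha]; apply in_map_iff in Ha as (x & Hx & _).
    + unfold tr_pos in Hx. destruct (Phi x); discriminate.
    + unfold tr_neg in Hx. destruct (Phi x); [discriminate|destruct x; discriminate].
Qed.

Lemma ereduct_ext (A : Atom -> Prop) E R (Phi Phi' : lit Atom -> bool) :
  wf_elp A E R -> (forall l, E l -> Phi l = Phi' l) -> ereduct Phi R = ereduct Phi' R.
Proof.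
  intros [_ HW] Heq. apply functional_extensionality; intro r'.
  apply propositional_extensionality.
  assert (Hr : forall r, R r -> ereduct_rule Phi r = ereduct_rule Phi' r).
  { intros r Hr. destruct (HW r Hr) as (_ & _ & Hp & Hn). unfold ereduct_rule.
    f_equal. f_equal. f_equal.
    - apply map_ext_in. intros l Hl. unfold tr_pos. rewrite Heq; auto.
    - apply map_ext_in. intros l Hl. unfold tr_neg. rewrite Heq; auto. }
  split; intros (r & HR & ->); exists r; split; auto; rewrite (Hr r HR); reflexivity.
Qed.

End Aux.

Theorem theorem1 (Atom : Type) (A A' : Atom -> Prop) (E E' : lit Atom -> Prop)
  (R : erule Atom -> Prop) :
  wf_elp A E R ->
  wf_elp A' E' R ->
  (forall a, A a -> A' a) ->
  (forall l, E l -> E' l) ->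
  forall M : (Atom -> Prop) -> Prop,
    is_cwv A E R M <-> is_cwv A' E' R M.
Proof.
  intros HW HW' HA HE M. split.
  - intros (Phi & HPE & HM & [Hne [Ht Hf]]).
    set (Phi' := fun l => if Phi l then true else
           if excluded_middle_informative (E' l /\ exists I, M I /\ ~ lsat I l) then true else false).
    assert (Hsame : forall l, E l -> Phi l = Phi' l).
    { intros l Hl. unfold Phi'. destruct (Phi l) eqn:E1; auto.
      destruct excluded_middle_informative as [(_ & I & HI & Hn)|]; auto.
      all: try (exfalso; exact (Hn (Hf l Hl E1 I HI))). }
    exists Phi'. split; [|split; [|split; [exact Hne|split]]].
    + intros l. unfold Phi'. destruct (Phi l) eqn:E1; [auto|].
      destruct excluded_middle_informative as [[H _]|]; [auto|discriminate].
    + intros I. rewrite HM. rewrite (@ereduct_ext _ _ _ _ _ _ HW Hsame).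
      apply answer_set_equiv; auto. eapply ereduct_good; eauto.
    + intros l Hl. unfold Phi'. destruct (Phi l) eqn:E1.
      * intros _. apply Ht; auto.
      * destruct excluded_middle_informative as [(_ & H)|]; [auto|discriminate].
    + intros l Hl. unfold Phi'. destruct (Phi l) eqn:E1; [discriminate|].
      destruct excluded_middle_informative as [|Hn]; [discriminate|].
      intros _ I HI. apply NNPP; intro H. apply Hn. split; eauto.
  - intros (Phi' & HPE & HM & [Hne [Ht Hf]]).
    set (Phi := fun l => if excluded_middle_informative (E l) then Phi' l else false).
    assert (Hsame : forall l, E l -> Phi l = Phi' l).
    { intros l Hl. unfold Phi. destruct excluded_middle_informative; tauto. }
    exists Phi. split; [|split; [|split; [exact Hne|split]]].
    + intros l. unfold Phi. destruct excluded_middle_informative; auto; discriminate.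
    + intros I. rewrite HM. rewrite <- (@ereduct_ext _ _ _ _ _ _ HW Hsame).
      symmetry. apply answer_set_equiv; auto. eapply ereduct_good; eauto.
    + intros l Hl H. apply Ht; auto. rewrite <- Hsame; auto.
    + intros l Hl H. apply Hf; auto. rewrite <- Hsame; auto.
Qed.
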